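(* Let $\mathcal{P}$ be a BMS channel and let $(C_i)_{i\ge1}$ be a sequence of binary codes with rates $(R_i)_{i\ge1}$ such that $\limsup_{i\to\infty}R_i<C(\mathcal{P})$ and such that a uniformly random codeword of $C_i$ has each coordinate marginally distributed as Bernoulli$(1/2)$. Let $P_e(C_i,\mathcal{P},j)$ be the probability that the maximum-likelihood decoder decodes coordinate $j$ of a uniformly random codeword of $C_i$ incorrectly given the channel outputs at all other coordinates, and assume $P_e(C_i,\mathcal{P},j)$ does not depend on $j$; denote it $P_e(C_i,\mathcal{P})$. Then there exists $c>0$ such that $P_e(C_i,\mathcal{P})<1/2-c$ for all sufficiently large $i$.
   Context: A binary code $C\subseteq\{0,1\}^n$ has rate $\log_2|C|/n$. A BMS channel is a conditional distribution $\mathcal{P}(y\mid x)$, $x\in\{0,1\}$, $y$ in a (finite or countable) output alphabet $\mathcal{Y}$, together with an involution $\sigma$ of $\mathcal{Y}$ with $\mathcal{P}(y\mid1)=\mathcal{P}(\sigma(y)\mid0)$; it acts independently on each coordinate. Its capacity is $C(\mathcal{P})=\frac12\sum_{x\in\{0,1\},y\in\mathcal{Y}}\mathcal{P}(y\mid x)\log_2\frac{\mathcal{P}(y\mid x)}{\mathcal{P}(y\mid0)/2+\mathcal{P}(y\mid1)/2}$. *)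

(* Defs.v *)
From HB Require Import structures.
From mathcomp Require Import all_boot all_order all_algebra.
From mathcomp Require Import all_classical all_reals all_analysis.
Set Implicit Arguments. Unset Strict Implicit. Unset Printing Implicit Defensive.
Import Order.TTheory GRing.Theory Num.Theory.
Local Open Scope classical_set_scope.
Local Open Scope ring_scope.

Definition log2 {R : realType} (x : R) : R := ln x / ln 2.

(* A BMS channel with countable (possibly finite) output alphabet Y:
   transition probabilities P x y = P(y | x), x : bool (false = 0, true = 1),
   together with an involution sigma with P(y|1) = P(sigma y|0). *)
Definition is_BMS {R : realType} {Y : countType} (P : bool -> Y -> R)
  (sigma : Y -> Y) : Prop :=
  (forall x y, 0 <= P x y) /\
  (forall x, (\esum_(y in [set: Y]) (P x y)%:E = 1)%E) /\
  (forall y, sigma (sigma y) = y) /\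
  (forall y, P true y = P false (sigma y)).

(* capacity C(P) = 1/2 sum_{x,y} P(y|x) log2 (P(y|x) / (P(y|0)/2 + P(y|1)/2)),
   the sum over x being done inside (the inner sum over x is nonnegative,
   so the sum over the countable set Y is a sum of nonnegative terms). *)
Definition capacity {R : realType} {Y : countType} (P : bool -> Y -> R) : \bar R :=
  (\esum_(y in [set: Y])
     ((1/2) * \sum_(x : bool)
        P x y * log2 (P x y / (P false y / 2 + P true y / 2)))%:E)%E.

Definition bcode (n : nat) := {set {ffun 'I_n -> bool}}.

Definition rate {R : realType} n (C : bcode n) : R := log2 (#|C|%:R) / n%:R.

Definition unif_marginals n (C : bcode n) : Prop :=
  forall j : 'I_n, (#|[set x in C | x j]| * 2 = #|C|)%N.

Definition others n (j : 'I_n) := {k : 'I_n | k != j}.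
Definition outs (Y : countType) n (j : 'I_n) := {ffun others j -> Y}.

(* joint probability P(X_j = b, Y_{-j} = y) for X uniform on C *)
Definition joint {R : realType} {Y : countType} (P : bool -> Y -> R) n
  (C : bcode n) (j : 'I_n) (b : bool) (y : outs Y j) : R :=
  (#|C|%:R)^-1 * \sum_(x in C | x j == b) \prod_(k : others j) P (x (val k)) (y k).

Definition marg {R : realType} n (C : bcode n) (j : 'I_n) (b : bool) : R :=
  #|[set x in C | x j == b]|%:R / #|C|%:R.

(* maximum-likelihood decoder of bit j from the other outputs:
   argmax_b P(y | X_j = b) (ties broken towards 0; the error probability
   does not depend on the tie-breaking rule) *)
Definition ML_dec {R : realType} {Y : countType} (P : bool -> Y -> R) n
  (C : bcode n) (j : 'I_n) (y : outs Y j) : bool :=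
  @joint R Y P n C j false y / @marg R n C j false < @joint R Y P n C j true y / @marg R n C j true.

Definition Pe {R : realType} {Y : countType} (P : bool -> Y -> R) n
  (C : bcode n) (j : 'I_n) : \bar R :=
  (\esum_(y in [set: outs Y j]) (@joint R Y P n C j (~~ @ML_dec R Y P n C j y) y)%:E)%E.

(* Main.v *)
Require Import Defs.
From HB Require Import structures.
From mathcomp Require Import all_boot all_order all_algebra.
From mathcomp Require Import all_classical all_reals all_analysis.
From mathcomp Require Import ring lra zify.
Import Order.TTheory GRing.Theory Num.Theory.
Set Implicit Arguments. Unset Strict Implicit. Unset Printing Implicit Defensive.
Local Open Scope ring_scope.

Section Xlnx.
Variable R : realType.
Definition xlnx (x : R) := x * ln x.

Lemma xlnx0 : xlnx 0 = 0. Proof. by rewrite /xlnx mul0r. Qed.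
Lemma xlnx1 : xlnx 1 = 0. Proof. by rewrite /xlnx ln1 mulr0. Qed.

Lemma xlnxM (a b : R) : 0 <= a -> 0 <= b -> xlnx (a * b) = a * xlnx b + b * xlnx a.
Proof.
rewrite /xlnx; rewrite le0r => /orP[/eqP->|a0]; first by rewrite !mul0r mulr0 addr0.
rewrite le0r => /orP[/eqP->|b0]; first by rewrite !(mulr0,mul0r) add0r.
by rewrite lnM ?posrE // mulrDr; ring.
Qed.

Lemma ln_le_sub1 (x : R) : 0 < x -> ln x <= x - 1.
Proof.
move=> x0; have h : -1 < x - 1 by lra.
by have := le_ln1Dx h; rewrite addrC subrK.
Qed.

Lemma ls_scalar (a c A C : R) : 0 <= a -> a <= c -> 0 < A -> 0 < C ->
  a * (ln c - ln a) <= a * (ln C - ln A) + c * A / C - a.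
Proof.
move=> a0 ac A0 C0; move: a0; rewrite le0r => /orP[/eqP az|a0].
  subst a; rewrite !mul0r add0r subr0; apply: divr_ge0; [apply: mulr_ge0|]; lra.
have c0 : 0 < c by apply: lt_le_trans ac.
have h := ln_le_sub1 (x := c * A / (a * C)) _.
have hx : 0 < c * A / (a * C) by apply: divr_gt0; apply: mulr_gt0.
move: (h hx); rewrite ln_div ?posrE ?mulr_gt0 // !lnM ?posrE // => hh.
have : a * (ln c + ln A - (ln a + ln C)) <= a * (c * A / (a * C) - 1).
  by rewrite ler_pM2l.
have -> : a * (c * A / (a * C) - 1) = c * A / C - a.
  by field; apply/andP; split; apply: lt0r_neq0.
move=> H; lra.
Qed.


Lemma logsum (F : finType) (a c : F -> R) :
  (forall f, 0 <= a f) -> (forall f, a f <= c f) ->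
  \sum_f a f * (ln (c f) - ln (a f)) <=
  (\sum_f a f) * (ln (\sum_f c f) - ln (\sum_f a f)).
Proof.
move=> a0 ac.
have A0 : 0 <= \sum_f a f by apply: sumr_ge0 => f _.
have AC : \sum_f a f <= \sum_f c f by apply: ler_sum => f _.
move: A0; rewrite le0r => /orP[/eqP Az|Ap].
  rewrite Az mul0r; rewrite big1 // => f _.
  by rewrite (psumr_eq0P (P := predT) (fun i _ => a0 i) Az) // mul0r.
have Cp : 0 < \sum_f c f by apply: lt_le_trans AC.
apply: le_trans (_ : \sum_f (a f * (ln (\sum_f c f) - ln (\sum_f a f))
     + c f * (\sum_f a f) / (\sum_f c f) - a f) <= _).
  apply: ler_sum => f _; exact: ls_scalar.
rewrite !sumrB big_split /= -!big_distrl /=.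
rewrite mulrAC divff ?mul1r ?addrK //; exact: lt0r_neq0.
Qed.

Definition phi (a b : R) := xlnx (a + b) - xlnx a - xlnx b.

Lemma phiE a b : phi a b = a * (ln (a + b) - ln a) + b * (ln (a + b) - ln b).
Proof. rewrite /phi /xlnx; ring. Qed.

Lemma phi_sum (F : finType) (a b : F -> R) :
  (forall f, 0 <= a f) -> (forall f, 0 <= b f) ->
  \sum_f phi (a f) (b f) <= phi (\sum_f a f) (\sum_f b f).
Proof.
move=> a0 b0.
rewrite phiE (eq_bigr _ (fun f _ => phiE (a f) (b f))) big_split /=.
have h1 : forall f, a f <= a f + b f by move=> f; rewrite lerDl.
have h2 : forall f, b f <= a f + b f by move=> f; rewrite lerDr.
apply: lerD.
  by have := @logsum F a (fun f => a f + b f) a0 h1; rewrite big_split.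
by have := @logsum F b (fun f => a f + b f) b0 h2; rewrite big_split.
Qed.

End Xlnx.

Definition mn {R : realType} (a b : R) := if a < b then a else b.

Section G.
Variable R : realType.
Variable F : finType.
Variable P : bool -> F -> R.
Hypothesis P0 : forall b f, 0 <= P b f.
Hypothesis P1 : forall b, \sum_f P b f = 1.

Definition mf (s0 s1 : R) f := s0 * P false f + s1 * P true f.
Definition gterm (s0 s1 : R) f :=
  s0 * xlnx (P false f) + s1 * xlnx (P true f) - xlnx (mf s0 s1 f).
Definition g (s0 s1 : R) := \sum_f gterm s0 s1 f + xlnx (s0 + s1).

Lemma sum_mf s0 s1 : \sum_f mf s0 s1 f = s0 + s1.
Proof. by rewrite /mf big_split /= -!big_distrr /= !P1 !mulr1. Qed.

Lemma mf_ge0 s0 s1 f : 0 <= s0 -> 0 <= s1 -> 0 <= mf s0 s1 f.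
Proof. by move=> ? ?; rewrite /mf addr_ge0 // mulr_ge0. Qed.

Lemma g_superadd (v0 v1 w0 w1 : R) : 0 <= v0 -> 0 <= v1 -> 0 <= w0 -> 0 <= w1 ->
  g v0 v1 + g w0 w1 <= g (v0 + w0) (v1 + w1).
Proof.
move=> hv0 hv1 hw0 hw1.
have E : forall f, gterm (v0 + w0) (v1 + w1) f =
   gterm v0 v1 f + gterm w0 w1 f - phi (mf v0 v1 f) (mf w0 w1 f).
  move=> f; rewrite /gterm /phi.
  have -> : mf (v0 + w0) (v1 + w1) f = mf v0 v1 f + mf w0 w1 f by rewrite /mf; ring.
  ring.
rewrite /g (eq_bigr _ (fun f _ => E f)).
have -> : \sum_f (gterm v0 v1 f + gterm w0 w1 f - phi (mf v0 v1 f) (mf w0 w1 f)) =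
  \sum_f gterm v0 v1 f + \sum_f gterm w0 w1 f - \sum_f phi (mf v0 v1 f) (mf w0 w1 f).
  by rewrite -big_split -sumrB.
have := phi_sum (fun f => mf_ge0 f hv0 hv1) (fun f => mf_ge0 f hw0 hw1).
rewrite !sum_mf {2}/phi.
have -> : v0 + w0 + (v1 + w1) = v0 + v1 + (w0 + w1) by ring.
lra.
Qed.

Lemma g_homog (c s0 s1 : R) : 0 <= c -> 0 <= s0 -> 0 <= s1 ->
  g (c * s0) (c * s1) = c * g s0 s1.
Proof.
move=> hc h0 h1.
have E : forall f, gterm (c * s0) (c * s1) f = c * gterm s0 s1 f - mf s0 s1 f * xlnx c.
  move=> f; rewrite /gterm.
  have -> : mf (c * s0) (c * s1) f = c * mf s0 s1 f by rewrite /mf; ring.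
  rewrite xlnxM //; last exact: mf_ge0.
  ring.
rewrite /g (eq_bigr _ (fun f _ => E f)) sumrB -big_distrr -big_distrl /= sum_mf.
have -> : c * s0 + c * s1 = c * (s0 + s1) by ring.
rewrite xlnxM //; last exact: addr_ge0.
ring.
Qed.

Lemma g0l (t : R) : 0 <= t -> g 0 t = 0.
Proof.
move=> ht.
have E : forall f, gterm 0 t f = - (P true f * xlnx t).
  move=> f; rewrite /gterm /mf !mul0r !add0r xlnxM //; ring.
rewrite /g (eq_bigr _ (fun f _ => E f)) sumrN -big_distrl /= P1 add0r; ring.
Qed.

Lemma g0r (t : R) : 0 <= t -> g t 0 = 0.
Proof.
move=> ht.
have E : forall f, gterm t 0 f = - (P false f * xlnx t).
  move=> f; rewrite /gterm /mf !mul0r !addr0 xlnxM //; ring.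
rewrite /g (eq_bigr _ (fun f _ => E f)) sumrN -big_distrl /= P1 addr0; ring.
Qed.

Lemma g_min (s0 s1 : R) : 0 <= s0 -> 0 <= s1 ->
  2 * mn s0 s1 * g (1/2) (1/2) <= g s0 s1.
Proof.
move=> h0 h1.
have gss : forall s, 0 <= s -> g s s = 2 * s * g (1/2) (1/2).
  move=> s hs; rewrite -g_homog; [|lra|lra|lra].
  by congr g; field.
rewrite /mn; case: ltP => [hle|hlt].
  rewrite -gss //.
  have hd : 0 <= s1 - s0 by lra.
  have := g_superadd h0 h0 (lexx 0) hd; rewrite g0l //.
  have -> : s0 + (s1 - s0) = s1 by ring.
  by rewrite !addr0.
rewrite -gss //.
have hd : 0 <= s0 - s1 by lra.
have := g_superadd h1 h1 hd (lexx 0); rewrite g0r //.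
have -> : s1 + (s0 - s1) = s0 by ring.
by rewrite !addr0.
Qed.

End G.

Section Core.
Variable R : realType.
Variable F : finType.
Variable P : bool -> F -> R.
Hypothesis P0 : forall b f, 0 <= P b f.
Hypothesis P1 : forall b, \sum_f P b f = 1.
Variable n : nat.
Variable mu : {ffun 'I_n -> bool} -> R.
Hypothesis mu0 : forall x, 0 <= mu x.
Hypothesis mu1 : \sum_x mu x = 1.

Lemma cardF_gt0 : (0 < #|F|)%N.
Proof.
rewrite lt0n; apply/negP => /eqP h.
have := P1 false; rewrite big_pred0 => [|f]; last by have := card0_eq h f; rewrite !inE.
by move=> /eqP; rewrite eq_sym oner_eq0.
Qed.

Definition u (f : F) : R := (#|F|%:R)^-1.
Lemma u_gt0 f : 0 < u f.
Proof. by rewrite /u invr_gt0 ltr0n cardF_gt0. Qed.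
Lemma u_ge0 f : 0 <= u f. Proof. exact: ltW (u_gt0 f). Qed.
Lemma sum_u : \sum_f u f = 1.
Proof.
rewrite /u sumr_const -[_ *+ _]mulr_natr mulVf //.
by rewrite pnatr_eq0 -lt0n cardF_gt0.
Qed.

Definition upd (y : {ffun 'I_n -> F}) (j : 'I_n) (f : F) : {ffun 'I_n -> F} :=
  [ffun k => if k == j then f else y k].

Lemma sum_upd j (G : {ffun 'I_n -> F} -> R) :
  \sum_y G y = \sum_(y : {ffun 'I_n -> F}) u (y j) * \sum_f G (upd y j f).
Proof.
pose sg (p : {ffun 'I_n -> F} * F) := (upd p.1 j p.2, p.1 j).
have sgK : involutive sg.
  case=> y f; rewrite /sg /=; congr pair; last by rewrite /upd ffunE eqxx.
  by apply/ffunP => k; rewrite !ffunE; case: eqP => // ->.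
have -> : \sum_(y : {ffun 'I_n -> F}) u (y j) * \sum_f G (upd y j f) =
          \sum_p (fun p => u p.2 * G p.1) (sg p).
  rewrite -(pair_bigA _ (fun (y : {ffun 'I_n -> F}) (f : F) => u (y j) * G (upd y j f))) /=.
  by apply: eq_bigr => y _; rewrite big_distrr.
rewrite -(reindex_inj (P := xpredT) (F := fun p => u p.2 * G p.1) (inv_inj sgK)) /=.
rewrite -(pair_bigA _ (fun (y : {ffun 'I_n -> F}) (f : F) => u f * G y)) /=.
by apply: eq_bigr => y _; rewrite -big_distrl /= sum_u mul1r.
Qed.


Definition V (A : {set 'I_n}) k b f := if k \in A then P b f else u f.
Definition W A (x : {ffun 'I_n -> bool}) (y : {ffun 'I_n -> F}) :=
  \prod_k V A k (x k) (y k).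
Definition wr A j (x : {ffun 'I_n -> bool}) (y : {ffun 'I_n -> F}) :=
  \prod_(k | k != j) V A k (x k) (y k).
Definition Q A y := \sum_x mu x * W A x y.
Definition Inf A := \sum_y (\sum_x mu x * xlnx (W A x y) - xlnx (Q A y)).
Definition PeC (j : 'I_n) A := \sum_(y : {ffun 'I_n -> F})
  mn (\sum_(x : {ffun 'I_n -> bool} | ~~ x j) mu x * W A x y)
     (\sum_(x : {ffun 'I_n -> bool} | x j) mu x * W A x y).

Lemma V_ge0 (A : {set 'I_n}) k b f : 0 <= V A k b f.
Proof. by rewrite /V; case: ifP => _; [exact: P0 | exact: u_ge0]. Qed.
Lemma W_ge0 (A : {set 'I_n}) x y : 0 <= W A x y.
Proof. by apply: prodr_ge0 => k _; exact: V_ge0. Qed.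
Lemma wr_ge0 (A : {set 'I_n}) j x y : 0 <= wr A j x y.
Proof. by apply: prodr_ge0 => k _; exact: V_ge0. Qed.

Lemma WE (A : {set 'I_n}) j x y : W A x y = V A j (x j) (y j) * wr A j x y.
Proof. by rewrite /W (bigD1 j). Qed.

Lemma wr_upd (A : {set 'I_n}) j x y f : wr A j x (upd y j f) = wr A j x y.
Proof.
by apply: eq_bigr => k kj; rewrite /upd ffunE (negbTE kj).
Qed.

Lemma wr_setU1 (A : {set 'I_n}) j x y : wr (j |: A) j x y = wr A j x y.
Proof.
by apply: eq_bigr => k kj; rewrite /V !inE (negbTE kj).
Qed.

Lemma V_setU1 (A : {set 'I_n}) j : V (j |: A) j = P.
Proof. by rewrite /V !inE eqxx. Qed.

Lemma V_notin (A : {set 'I_n}) j : j \notin A -> V A j = fun _ => u.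
Proof. by move=> /negbTE h; rewrite /V h. Qed.

Lemma sum_W (A : {set 'I_n}) x : \sum_y W A x y = 1.
Proof.
rewrite /W -(@bigA_distr_bigA R 0 1 *%R +%R _ _ (fun k f => V A k (x k) f)) /=.
apply: big1 => k _; rewrite /V; case: (k \in A); [exact: (P1 (x k)) | exact: sum_u].
Qed.

Lemma split_x (j : 'I_n) (G : {ffun 'I_n -> bool} -> R) :
  \sum_x G x = \sum_(x : {ffun 'I_n -> bool} | ~~ x j) G x + \sum_(x : {ffun 'I_n -> bool} | x j) G x.
Proof. by rewrite [LHS](bigID (fun x : {ffun 'I_n -> bool} => x j)) /= addrC. Qed.


Definition sw0 (A : {set 'I_n}) (j : 'I_n) (y : {ffun 'I_n -> F}) := \sum_(x : {ffun 'I_n -> bool} | ~~ x j) mu x * wr A j x y.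
Definition sw1 (A : {set 'I_n}) (j : 'I_n) (y : {ffun 'I_n -> F}) := \sum_(x : {ffun 'I_n -> bool} | x j) mu x * wr A j x y.

Lemma sw0_ge0 (A : {set 'I_n}) (j : 'I_n) y : 0 <= sw0 A j y.
Proof. by apply: sumr_ge0 => x _; apply: mulr_ge0 => //; exact: wr_ge0. Qed.
Lemma sw1_ge0 (A : {set 'I_n}) (j : 'I_n) y : 0 <= sw1 A j y.
Proof. by apply: sumr_ge0 => x _; apply: mulr_ge0 => //; exact: wr_ge0. Qed.

Lemma sum_hj (A : {set 'I_n}) (j : 'I_n) y (h : bool -> R) :
  \sum_x mu x * wr A j x y * h (x j) = sw0 A j y * h false + sw1 A j y * h true.
Proof.
rewrite (split_x j) /sw0 /sw1 !big_distrl /=; congr (_ + _).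
  by apply: eq_bigr => x /negbTE ->.
by apply: eq_bigr => x ->.
Qed.

Lemma sum_w (A : {set 'I_n}) (j : 'I_n) y : \sum_x mu x * wr A j x y = sw0 A j y + sw1 A j y.
Proof.
have := sum_hj A j y (fun _ => 1); rewrite !mulr1 => <-.
by apply: eq_bigr => x _; rewrite mulr1.
Qed.

Lemma Inf_A (A : {set 'I_n}) (j : 'I_n) : j \notin A ->
  Inf A = \sum_(y : {ffun 'I_n -> F}) u (y j) * (\sum_x mu x * xlnx (wr A j x y)
                              - xlnx (sw0 A j y + sw1 A j y)).
Proof.
move=> jA; apply: eq_bigr => y _.
have EW : forall x, W A x y = u (y j) * wr A j x y.
  by move=> x; rewrite (WE A j) (V_notin jA).
have EQ : Q A y = u (y j) * (sw0 A j y + sw1 A j y).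
  rewrite /Q -sum_w big_distrr /=; apply: eq_bigr => x _; rewrite EW; ring.
rewrite EQ xlnxM ?u_ge0 ?addr_ge0 ?sw0_ge0 ?sw1_ge0 //.
have -> : \sum_x mu x * xlnx (W A x y) =
   u (y j) * \sum_x mu x * xlnx (wr A j x y) + xlnx (u (y j)) * \sum_x mu x * wr A j x y.
  rewrite !big_distrr -big_split /=; apply: eq_bigr => x _.
  by rewrite EW xlnxM ?u_ge0 ?wr_ge0 //; ring.
rewrite sum_w; ring.
Qed.

Lemma Inf_jA (A : {set 'I_n}) (j : 'I_n) : j \notin A ->
  Inf (j |: A) = \sum_(y : {ffun 'I_n -> F}) u (y j) * (\sum_x mu x * xlnx (wr A j x y)
     + sw0 A j y * \sum_f xlnx (P false f) + sw1 A j y * \sum_f xlnx (P true f)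
     - \sum_f xlnx (mf P (sw0 A j y) (sw1 A j y) f)).
Proof.
move=> jA; rewrite /Inf (sum_upd j); apply: eq_bigr => y _; congr (_ * _).
have EW : forall x f, W (j |: A) x (upd y j f) = P (x j) f * wr A j x y.
  move=> x f; rewrite (WE _ j) V_setU1 wr_setU1 wr_upd /upd ffunE eqxx //.
have EQ : forall f, Q (j |: A) (upd y j f) = mf P (sw0 A j y) (sw1 A j y) f.
  move=> f; rewrite /Q /mf -(sum_hj A j y (fun b => P b f)).
  by apply: eq_bigr => x _; rewrite EW; ring.
rewrite sumrB; congr (_ - _); last by apply: eq_bigr => f _; rewrite EQ.
rewrite exchange_big /=.
have -> : \sum_x \sum_f mu x * xlnx (W (j |: A) x (upd y j f)) =
  \sum_x (mu x * xlnx (wr A j x y) + mu x * wr A j x y * \sum_f xlnx (P (x j) f)).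
  apply: eq_bigr => x _.
  have -> : \sum_f mu x * xlnx (W (j |: A) x (upd y j f)) =
     \sum_f (mu x * xlnx (wr A j x y) * P (x j) f + mu x * wr A j x y * xlnx (P (x j) f)).
    apply: eq_bigr => f _; rewrite EW xlnxM ?P0 ?wr_ge0 //; ring.
  by rewrite big_split /= -big_distrr -big_distrr /= P1 mulr1.
rewrite big_split /= (sum_hj A j y (fun b => \sum_f xlnx (P b f))); ring.
Qed.

Lemma Inf_step (A : {set 'I_n}) (j : 'I_n) : j \notin A ->
  Inf (j |: A) - Inf A = \sum_(y : {ffun 'I_n -> F}) u (y j) * g P (sw0 A j y) (sw1 A j y).
Proof.
move=> jA; rewrite (Inf_jA jA) (Inf_A jA) -sumrB; apply: eq_bigr => y _.
rewrite /g /gterm big_split big_split /= sumrN -!big_distrr /=; ring.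
Qed.


Lemma mnM (c a b : R) : 0 < c -> mn (c * a) (c * b) = c * mn a b.
Proof. by move=> c0; rewrite /mn ltr_pM2l //; case: ifP. Qed.
Lemma mn_le_l (a b : R) : mn a b <= a.
Proof. by rewrite /mn; case: ltP => // /ltW. Qed.
Lemma mn_le_r (a b : R) : mn a b <= b.
Proof. by rewrite /mn; case: ltP => // /ltW. Qed.
Lemma mn_glb (a b c : R) : c <= a -> c <= b -> c <= mn a b.
Proof. by rewrite /mn; case: ltP. Qed.
Lemma mn_ge0 (a b : R) : 0 <= a -> 0 <= b -> 0 <= mn a b.
Proof. by move=> ? ?; apply: mn_glb. Qed.
Lemma mn_sum (a b : F -> R) : \sum_f mn (a f) (b f) <= mn (\sum_f a f) (\sum_f b f).
Proof.
by apply: mn_glb; apply: ler_sum => f _; [exact: mn_le_l | exact: mn_le_r].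
Qed.

Lemma PeE (A : {set 'I_n}) (j : 'I_n) : j \notin A ->
  PeC j A = \sum_(y : {ffun 'I_n -> F}) u (y j) * mn (sw0 A j y) (sw1 A j y).
Proof.
move=> jA; apply: eq_bigr => y _; rewrite -mnM ?u_gt0 //.
by rewrite /sw0 /sw1 !mulr_sumr; congr mn; apply: eq_bigr => x _;
  rewrite (WE A j) (V_notin jA); ring.
Qed.

Lemma C_ge0 : 0 <= g P (1/2) (1/2).
Proof.
have h : (0 : R) <= 1/2 by lra.
have := g_superadd P0 P1 h (lexx 0) (lexx 0) h.
by rewrite g0r // g0l // !addr0 add0r.
Qed.

Lemma Inf_step_ge (A : {set 'I_n}) (j : 'I_n) : j \notin A ->
  Inf A + 2 * g P (1/2) (1/2) * PeC j A <= Inf (j |: A).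
Proof.
move=> jA; rewrite -lerBrDl Inf_step // (PeE jA) mulr_sumr /=.
apply: ler_sum => y _; rewrite mulrCA; apply: ler_wpM2l; first exact: u_ge0.
by rewrite mulrAC; apply: g_min => //; [exact: sw0_ge0 | exact: sw1_ge0].
Qed.

Lemma Pe_mono1 (A : {set 'I_n}) (j k : 'I_n) : k != j -> PeC j (k |: A) <= PeC j A.
Proof.
move=> kj; have [kA|kA] := boolP (k \in A).
  have -> : k |: A = A by apply/setP => i; rewrite !inE; case: eqP => // ->.
  by [].
rewrite /PeC (sum_upd k); apply: ler_sum => y _.
have EW : forall x f, W (k |: A) x (upd y k f) = P (x k) f * wr A k x y.
  move=> x f; rewrite (WE _ k) V_setU1 wr_setU1 wr_upd /upd ffunE eqxx //.
have EW' : forall x, W A x y = u (y k) * wr A k x y.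
  by move=> x; rewrite (WE A k) (V_notin kA).
apply: le_trans (_ : u (y k) * mn (\sum_(x : {ffun 'I_n -> bool} | ~~ x j) mu x * wr A k x y)
                   (\sum_(x : {ffun 'I_n -> bool} | x j) mu x * wr A k x y) <= _).
  apply: ler_wpM2l; first exact: u_ge0.
  have Eb : forall (pr : pred {ffun 'I_n -> bool}),
    \sum_f \sum_(x | pr x) mu x * W (k |: A) x (upd y k f) =
    \sum_(x | pr x) mu x * wr A k x y.
    move=> pr; rewrite exchange_big /=; apply: eq_bigr => x _.
    under eq_bigr do rewrite EW.
    by rewrite -mulr_sumr -mulr_suml P1 mul1r.
  apply: le_trans (mn_sum _ _) _.
  by rewrite (Eb (fun x => ~~ x j)) (Eb (fun x => x j)).
rewrite -mnM ?u_gt0 // !mulr_sumr /=.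
by rewrite le_eqVlt; apply/orP; left; apply/eqP; congr mn; apply: eq_bigr => x _;
  rewrite EW'; ring.
Qed.


Lemma Pe_mono_seq (j : 'I_n) (s : seq 'I_n) : forall (A : {set 'I_n}),
  j \notin s -> PeC j (A :|: [set x in s]) <= PeC j A.
Proof.
elim: s => [|k s IH] A.
  move=> _; have -> : A :|: [set x in [::]] = A.
    by apply/setP => i; rewrite !inE orbF.
  by [].
rewrite inE negb_or => /andP[jk js].
have -> : A :|: [set x in k :: s] = (k |: A) :|: [set x in s].
  by apply/setP => i; rewrite !inE orbA [(_ == _) || _]orbC.
apply: le_trans (IH _ js) _; apply: Pe_mono1; by rewrite eq_sym.
Qed.

Lemma Pe_mono (j : 'I_n) (A B : {set 'I_n}) : A \subset B -> j \notin B ->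
  PeC j B <= PeC j A.
Proof.
move=> AB jB.
have -> : B = A :|: [set x in enum (B :\: A)].
  apply/setP => i; rewrite !inE mem_enum !inE.
  case iA: (i \in A) => //=; by rewrite (fintype.subsetP AB).
apply: Pe_mono_seq; rewrite mem_enum !inE negb_and jB orbT //.
Qed.

Lemma Inf0 : Inf finset.set0 = 0.
Proof.
apply: big1 => y _.
have EW : forall x, W finset.set0 x y = \prod_k u (y k).
  by move=> x; apply: eq_bigr => k _; rewrite /V inE.
have -> : Q finset.set0 y = \prod_k u (y k).
  rewrite /Q (eq_bigr (fun x => mu x * \prod_k u (y k))); last by move=> x _; rewrite EW.
  by rewrite -mulr_suml mu1 mul1r.
rewrite (eq_bigr (fun x => mu x * xlnx (\prod_k u (y k)))); last by move=> x _; rewrite EW.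
by rewrite -mulr_suml mu1 mul1r subrr.
Qed.

Lemma Inf_le (m : R) (A : {set 'I_n}) : 0 < m -> (forall x, mu x = 0 \/ mu x = m) ->
  Inf A <= - ln m.
Proof.
move=> m0 hmu.
have E : Inf A = \sum_y \sum_x mu x * W A x y * (ln (W A x y) - ln (Q A y)).
  apply: eq_bigr => y _.
  rewrite /xlnx {2}/Q mulr_suml -sumrB; apply: eq_bigr => x _; ring.
rewrite E; apply: le_trans (_ : \sum_(y : {ffun 'I_n -> F}) \sum_x mu x * W A x y * (- ln m) <= _).
  apply: ler_sum => y _; apply: ler_sum => x _.
  have [->|hm] := hmu x; first by rewrite !mul0r.
  have [W0|Wp] := eqVneq (W A x y) 0; first by rewrite W0 !(mulr0, mul0r).
  have Wgt : 0 < W A x y by rewrite lt0r Wp W_ge0.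
  apply: ler_wpM2l; first by rewrite hm; apply: mulr_ge0; [exact: ltW | exact: W_ge0].
  have hQ : m * W A x y <= Q A y.
    rewrite /Q (bigD1 x) //= hm lerDl; apply: sumr_ge0 => x' _.
    by apply: mulr_ge0 => //; exact: W_ge0.
  have mW : 0 < m * W A x y by apply: mulr_gt0.
  have : ln (m * W A x y) <= ln (Q A y).
    by rewrite ler_ln // posrE (lt_le_trans mW hQ).
  rewrite lnM ?posrE //; lra.
rewrite exchange_big /=.
rewrite (eq_bigr (fun x => mu x * (- ln m))); last first.
  by move=> x _; rewrite -mulr_suml -mulr_sumr sum_W mulr1.
by rewrite -mulr_suml mu1 mul1r.
Qed.

Lemma core_seq (s : seq 'I_n) : uniq s ->
  2 * g P (1/2) (1/2) * \sum_(j <- s) PeC j ([set: 'I_n] :\ j) <= Inf [set x in s].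
Proof.
elim: s => [|j s IH].
  have -> : [set x in [::]] = finset.set0 :> {set 'I_n} by apply/setP => i; rewrite !inE.
  by rewrite big_nil mulr0 Inf0.
move=> /= /andP[js us].
have -> : [set x in j :: s] = j |: [set x in s].
  by apply/setP => i; rewrite !inE.
have jA : j \notin [set x in s] by rewrite inE.
apply: le_trans (Inf_step_ge jA).
rewrite big_cons mulrDr addrC; apply: lerD; first exact: IH.
apply: ler_wpM2l; first by apply: mulr_ge0 => //; exact: C_ge0.
apply: Pe_mono; last by rewrite !inE eqxx.
by apply/fintype.subsetP => i; rewrite !inE => his; apply/andP; split => //; apply: contraNneq js => <-.
Qed.

Theorem core (m : R) : 0 < m -> (forall x, mu x = 0 \/ mu x = m) ->
  2 * g P (1/2) (1/2) * \sum_j PeC j ([set: 'I_n] :\ j) <= - ln m.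
Proof.
move=> m0 hmu; apply: le_trans (Inf_le [set: 'I_n] m0 hmu).
have := core_seq (enum_uniq 'I_n).
have -> : [set x in enum 'I_n] = [set: 'I_n] by apply/setP => i; rewrite !inE mem_enum.
by rewrite big_enum.
Qed.

End Core.

Section Glue.
Variable R : realType.
Variable F : finType.
Variable n : nat.
Variable j : 'I_n.

Definition restr (z : {ffun 'I_n -> F}) : {ffun others j -> F} := [ffun k => z (val k)].
Definition glue (f : F) (z' : {ffun others j -> F}) : {ffun 'I_n -> F} :=
  [ffun k => if (insub k : option (others j)) is Some k' then z' k' else f].

Lemma glue_j f z' : glue f z' j = f.
Proof. by rewrite /glue ffunE insubF // eqxx. Qed.

Lemma restr_glue f z' : restr (glue f z') = z'.
Proof.
apply/ffunP => k; rewrite /restr /glue !ffunE.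
by rewrite (insubT (fun k => k != j) (valP k)) /=; congr (z' _); apply: val_inj.
Qed.

Lemma glue_restr (z : {ffun 'I_n -> F}) : glue (z j) (restr z) = z.
Proof.
apply/ffunP => k; rewrite /glue /restr !ffunE.
case: insubP => [k' kj <-|]; first by rewrite ffunE.
by rewrite negbK => /eqP ->.
Qed.

Lemma sum_glue (G : {ffun 'I_n -> F} -> R) :
  \sum_z G z = \sum_f \sum_(z' : {ffun others j -> F}) G (glue f z').
Proof.
rewrite pair_bigA /=.
rewrite (reindex (fun p : F * {ffun others j -> F} => glue p.1 p.2)) //=.
exists (fun z : {ffun 'I_n -> F} => (z j, restr z)) => [[f z'] _|z _] /=.
  by rewrite glue_j restr_glue.
exact: glue_restr.
Qed.

Lemma prod_others (G : 'I_n -> R) :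
  \prod_(k | k != j) G k = \prod_(k : others j) G (val k).
Proof.
rewrite (reindex_omap (fun k : others j => val k) (fun k => insub k)) /=.
  apply: eq_bigl => k; rewrite (valP k) /= valK; exact: eqxx.
by move=> k kj; rewrite insubT.
Qed.

End Glue.

Lemma sum_option (R : realType) (T : finType) (G : option T -> R) :
  \sum_o G o = G None + \sum_t G (Some t).
Proof.
rewrite (bigD1 None) //=; congr (_ + _).
rewrite (reindex_omap Some id) //=; last by case.
by apply: eq_bigl => t; rewrite eqxx.
Qed.

Lemma sum_seq_sub (R : realType) (Y : choiceType) (s : seq Y) (h : Y -> R) :
  uniq s -> \sum_(w : seq_sub s) h (ssval w) = \sum_(y <- s) h y.
Proof.
move=> us; rewrite -(big_map (@ssval _ s) xpredT h).
apply: perm_big; apply: uniq_perm => //.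
  by rewrite map_inj_uniq ?index_enum_uniq //; exact: val_inj.
move=> y; apply/mapP/idP => [[w _ ->]|ys]; first exact: ssvalP.
by exists (SeqSub ys) => //; rewrite mem_index_enum.
Qed.

Lemma sum_sub_le (R : realType) (Y : eqType) (r s : seq Y) (h : Y -> R) :
  uniq r -> uniq s -> {subset r <= s} -> (forall y, 0 <= h y) ->
  \sum_(y <- r) h y <= \sum_(y <- s) h y.
Proof.
move=> ur us rs h0.
rewrite [X in _ <= X](bigID (fun y => y \in r)) /=.
have -> : \sum_(y <- s | y \in r) h y = \sum_(y <- r) h y.
  rewrite -big_filter; apply: perm_big; apply: uniq_perm.
  - exact: filter_uniq.
  - exact: ur.
  by move=> y; rewrite mem_filter; apply/andP/idP => [[]//|yr]; split => //; exact: rs.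
by rewrite lerDl; apply: sumr_ge0.
Qed.

Section Merge.
Variable R : realType.
Variable Y : countType.
Variable P : bool -> Y -> R.
Hypothesis P0 : forall b y, 0 <= P b y.
Variable s : seq Y.
Hypothesis us : uniq s.
Hypothesis Ps : forall b, \sum_(y <- s) P b y <= 1.

Definition Fm := option (seq_sub s).
Definition Pm b (o : Fm) : R :=
  if o is Some w then P b (ssval w) else 1 - \sum_(y <- s) P b y.

Lemma Pm_ge0 b o : 0 <= Pm b o.
Proof. by case: o => [w|] /=; [exact: P0 | rewrite subr_ge0]. Qed.

Lemma Pm_sum b : \sum_o Pm b o = 1.
Proof.
rewrite sum_option /=.
by rewrite (sum_seq_sub (fun y => P b y) us); ring.
Qed.

End Merge.

Lemma sum_le_uniq (R : realType) (T : finType) (r : seq T) (h : T -> R) :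
  uniq r -> (forall t, 0 <= h t) -> \sum_(t <- r) h t <= \sum_t h t.
Proof.
move=> ur h0; rewrite big_uniq //= [X in _ <= X](bigID (fun t => t \in r)) /=.
by rewrite lerDl; apply: sumr_ge0.
Qed.

Definition tP {R : realType} (a b : R) :=
  1/2 * xlnx a + 1/2 * xlnx b - xlnx (1/2 * a + 1/2 * b).

Lemma scal2 (R : realType) (a m : R) : 0 <= a -> 0 < m -> a - m <= a * (ln a - ln m).
Proof.
move=> a0 m0; move: a0; rewrite le0r => /orP[/eqP->|ap]; first by rewrite mul0r; lra.
have hx : 0 < m / a by exact: divr_gt0.
have h := ln_le_sub1 hx; rewrite ln_div ?posrE // in h.
have : a * (ln m - ln a) <= a * (m / a - 1) by rewrite ler_pM2l.
have -> : a * (m / a - 1) = m - a by field; exact: lt0r_neq0.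
lra.
Qed.

Lemma tP_ge0 (R : realType) (a b : R) : 0 <= a -> 0 <= b -> 0 <= tP a b.
Proof.
move=> a0 b0; rewrite /tP.
set m := 1/2 * a + 1/2 * b.
have [m0|mp] := eqVneq m 0.
  have az : a = 0 by rewrite /m in m0; lra.
  have bz : b = 0 by rewrite /m in m0; lra.
  by rewrite az bz m0 !xlnx0; lra.
have mp' : 0 < m by rewrite lt0r mp /m; lra.
have E : 1/2 * xlnx a + 1/2 * xlnx b - xlnx m =
   1/2 * (a * (ln a - ln m)) + 1/2 * (b * (ln b - ln m)).
  by rewrite /xlnx /m; ring.
rewrite E; have := scal2 a0 mp'; have := scal2 b0 mp'; rewrite /m; lra.
Qed.

Section Red.
Variable R : realType.
Variable Y : countType.
Variable P : bool -> Y -> R.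
Hypothesis P0 : forall b y, 0 <= P b y.
Variable s : seq Y.
Hypothesis us : uniq s.
Hypothesis Ps : forall b, \sum_(y <- s) P b y <= 1.
Variable n : nat.
Variable C : bcode n.
Hypothesis C0 : (0 < #|C|)%N.

Definition muC (x : {ffun 'I_n -> bool}) : R := if x \in C then (#|C|%:R)^-1 else 0.

Lemma muC_ge0 x : 0 <= muC x.
Proof. by rewrite /muC; case: ifP => // _; rewrite invr_ge0 ler0n. Qed.

Lemma muC_sum : \sum_x muC x = 1.
Proof.
rewrite /muC -big_mkcond /= sumr_const -[_ *+ _]mulr_natr mulVf //.
by rewrite pnatr_eq0 -lt0n.
Qed.

Lemma muC_val x : muC x = 0 \/ muC x = (#|C|%:R)^-1.
Proof. by rewrite /muC; case: ifP => _; [right|left]. Qed.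

Local Notation Pms := (@Pm R Y P s).
Let Pm0 := @Pm_ge0 R Y P P0 s Ps.
Let Pm1 := @Pm_sum R Y P s us.

Definition Jb (j : 'I_n) (b : bool) (z' : {ffun others j -> Fm s}) :=
  \sum_(x : {ffun 'I_n -> bool} | x j == b) muC x * \prod_(k : others j) Pms (x (val k)) (z' k).

Lemma coreP_eq (j : 'I_n) :
  PeC (Pms) muC j ([set: 'I_n] :\ j) =
  \sum_(z' : {ffun others j -> Fm s}) mn (Jb false z') (Jb true z').
Proof.
rewrite /PeC (sum_glue j) /=.
have jT : j \notin [set: 'I_n] :\ j by rewrite !inE eqxx.
have EW : forall x f (z' : {ffun others j -> Fm s}), W (Pms) ([set: 'I_n] :\ j) x (glue f z') =
    @u R (Fm s) f * \prod_(k : others j) Pms (x (val k)) (z' k).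
  move=> x f z'; rewrite (WE _ _ j) (V_notin _ jT) glue_j; congr (_ * _).
  rewrite /wr prod_others; apply: eq_bigr => k _.
  rewrite /V !inE (valP k) /glue ffunE.
  by rewrite (insubT (fun k => k != j) (valP k)) /=; congr (Pms _ (z' _)); apply: val_inj.
rewrite (eq_bigr (fun f => @u R (Fm s) f * \sum_(z' : {ffun others j -> Fm s}) mn (Jb false z') (Jb true z'))).
  by rewrite -mulr_suml (sum_u Pm1) mul1r.
move=> f _; rewrite mulr_sumr; apply: eq_bigr => z' _.
rewrite -mnM ?(u_gt0 Pm1) //.
rewrite /Jb !mulr_sumr; congr mn.
  apply: eq_big => [x|x _]; first by case: (x j).
  by rewrite EW; ring.
apply: eq_big => [x|x _]; first by case: (x j).
by rewrite EW; ring.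
Qed.


Lemma Pm_insub b y : y \in s -> Pms b (insub y) = P b y.
Proof. by move=> ys; case: insubP => [w _ <-|] //=; rewrite ys. Qed.

Lemma omap_insub y : y \in s -> omap val (insub y : option (seq_sub s)) = Some y.
Proof. by move=> ys; case: insubP => [w _ <-|] //=; rewrite ys. Qed.

Definition lift (j : 'I_n) (y' : {ffun others j -> Y}) : {ffun others j -> Fm s} :=
  [ffun k => insub (y' k)].

Lemma Jb_lift (j : 'I_n) b (y' : {ffun others j -> Y}) : (forall k, y' k \in s) ->
  Jb b (lift y') = joint P C b y'.
Proof.
move=> ys; rewrite /Jb /joint mulr_sumr.
rewrite big_mkcond [RHS]big_mkcond /=; apply: eq_bigr => x _.
rewrite /muC; case: (x \in C); case: (x j == b) => /=; rewrite ?mul0r //.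
by congr (_ * _); apply: eq_bigr => k _; rewrite /lift ffunE Pm_insub.
Qed.

Lemma red (S : forall j : 'I_n, seq {ffun others j -> Y}) :
  (forall j, uniq (S j)) -> (forall j y' k, y' \in S j -> y' k \in s) ->
  2 * g Pms (1/2) (1/2) *
    \sum_j \sum_(y' <- S j) mn (joint P C false y') (joint P C true y')
  <= ln (#|C|%:R).
Proof.
move=> uS sS.
have Mp : 0 < (#|C|%:R : R) by rewrite ltr0n.
have Mi : 0 < (#|C|%:R : R)^-1 by rewrite invr_gt0.
have := core Pm0 Pm1 muC_ge0 muC_sum Mi muC_val.
rewrite lnV ?posrE // opprK; apply: le_trans.
apply: ler_wpM2l; first by apply: mulr_ge0 => //; exact: C_ge0 Pm0 Pm1.
apply: ler_sum => j _; rewrite coreP_eq.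
have H0 : forall z' : {ffun others j -> Fm s}, 0 <= mn (Jb false z') (Jb true z').
  move=> z'; apply: mn_ge0; apply: sumr_ge0 => x _; (apply: mulr_ge0;
    [exact: muC_ge0 | by apply: prodr_ge0 => k _; exact: Pm0]).
rewrite (eq_big_seq (fun y' => mn (Jb false (lift y')) (Jb true (lift y')))); last first.
  by move=> y' yS; rewrite !Jb_lift // => k; exact: sS yS.
rewrite -(big_map (@lift j) xpredT (fun z' => mn (Jb false z') (Jb true z'))).
apply: sum_le_uniq => //.
rewrite map_inj_in_uniq // => a b aS bS eab; apply/ffunP => k.
have := congr1 (fun z : {ffun others j -> Fm s} => omap val (z k)) eab; rewrite /lift !ffunE /=.
by rewrite !omap_insub ?(sS _ _ _ aS) ?(sS _ _ _ bS) // => -[].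
Qed.


Lemma cap_ge (r : seq Y) : uniq r -> {subset r <= s} ->
  \sum_(y <- r) tP (P false y) (P true y) <= g Pms (1/2) (1/2).
Proof.
move=> ur rs; rewrite /g.
have -> : (1/2 + 1/2 : R) = 1 by field.
rewrite xlnx1 addr0 sum_option.
have -> : \sum_t gterm Pms (1/2) (1/2) (Some t) = \sum_(t : seq_sub s) tP (P false (ssval t)) (P true (ssval t)) by [].
rewrite (sum_seq_sub (fun y => tP (P false y) (P true y)) us).
apply: le_trans (_ : \sum_(y <- s) tP (P false y) (P true y) <= _).
  by apply: sum_sub_le => // y; apply: tP_ge0.
rewrite lerDr; apply: tP_ge0; exact: Pm0.
Qed.

End Red.

Local Open Scope classical_set_scope.
Local Open Scope ring_scope.

Lemma Ps_le (R : realType) (Y : countType) (P : bool -> Y -> R)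
  (Psum : forall b, (\esum_(y in [set: Y]) (P b y)%:E = 1)%E) (s : seq Y) :
  uniq s -> forall b, \sum_(y <- s) P b y <= 1.
Proof.
move=> us b; rewrite -lee_fin -sumEFin fsbig_seq // -(Psum b).
apply: ereal_sup_ubound; exists [set` s] => //; split; [exact: finite_seq | done].
Qed.

Lemma plnE (R : realType) (p m : R) : 0 <= p -> (0 < p -> 0 < m) ->
  p * ln (p / m) = xlnx p - p * ln m.
Proof.
rewrite le0r => /orP[/eqP->|pp] h; first by rewrite !mul0r xlnx0 subr0.
by rewrite ln_div ?posrE ?h // /xlnx; ring.
Qed.

Lemma capE (R : realType) (Y : Type) (P : bool -> Y -> R) (y : Y) :
  0 <= P false y -> 0 <= P true y ->
  (1/2) * \sum_(x : bool) P x y * log2 (P x y / (P false y / 2 + P true y / 2))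
  = tP (P false y) (P true y) / ln 2.
Proof.
move=> a0 b0; rewrite big_bool /= /log2 /tP.
move: a0 b0; set a := P false y; set b := P true y => a0 b0.
have -> : 1/2 * a + 1/2 * b = a / 2 + b / 2 by field.
set m := a / 2 + b / 2.
have Eb : b * ln (b / m) = xlnx b - b * ln m by apply: plnE => // bp; rewrite /m; lra.
have Ea : a * ln (a / m) = xlnx a - a * ln m by apply: plnE => // ap; rewrite /m; lra.
rewrite !mulrA Ea Eb /xlnx /m; field.
by rewrite lt0r_neq0 // ln_gt0 //; lra.
Qed.

Lemma marg_eq (R : realType) n (C : bcode n) (j : 'I_n) :
  (0 < #|C|)%N -> (#|[set x in C | x j]| * 2 = #|C|)%N ->
  @marg R n C j false = @marg R n C j true /\ 0 < @marg R n C j true.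
Proof.
move=> C0 hu.
have ht : #|[set x in C | x j == true]| = #|[set x in C | x j]|.
  by apply: eq_card => x; rewrite !inE eqb_id.
have hs : (#|[set x in C | x j]| + #|[set x in C | x j == false]| = #|C|)%N.
  rewrite -(cardsID [set x : {ffun 'I_n -> bool} | x j] C); congr (_ + _)%N.
    by apply: eq_card => x; rewrite !inE andbC.
  by apply: eq_card => x; rewrite !inE eqbF_neg andbC.
have hf : #|[set x in C | x j == false]| = #|[set x in C | x j]|.
  move: hs; rewrite -hu; lia.
rewrite /marg ht hf; split => //.
apply: divr_gt0; rewrite ltr0n //.
move: C0; rewrite -hu; lia.
Qed.

Lemma PeF (R : realType) (Y : countType) (P : bool -> Y -> R) n (C : bcode n) (j : 'I_n) :
  (0 < #|C|)%N -> (#|[set x in C | x j]| * 2 = #|C|)%N ->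
  Pe P C j = (\esum_(y in [set: outs Y j]) (mn (joint P C false y) (joint P C true y))%:E)%E.
Proof.
move=> C0 hu; have [hm hp] := marg_eq R C0 hu.
rewrite /Pe; apply: eq_esum => y _; congr EFin.
rewrite /ML_dec hm ltr_pM2r ?invr_gt0 // /mn.
by case: ifP.
Qed.

Lemma ereal_between (R : realType) (a b : \bar R) : (a < b)%E ->
  exists r : R, (a < r%:E)%E /\ (r%:E < b)%E.
Proof.
case: a => [a| |]; case: b => [b| |] //= h.
- exists ((a + b) / 2); move: h; rewrite ?lte_fin => h; split; rewrite ?lte_fin; lra.
- exists (a + 1); clear h; split; [rewrite lte_fin; lra | exact: ltry].
- exists (b - 1); clear h; split; [exact: ltNyr | rewrite lte_fin; lra].
- by exists 0; split; [exact: ltNyr | exact: ltry].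
Qed.

Lemma rate_ge0 (R : realType) n (C : bcode n) : (0 < n)%N -> (0 < #|C|)%N ->
  0 <= @rate R n C.
Proof.
move=> n0 C0; rewrite /rate /log2; apply: divr_ge0; last exact: ler0n.
apply: divr_ge0; last by apply: ltW; apply: ln_gt0; rewrite ltr1n.
by apply: ln_ge0; rewrite ler1n.
Qed.

Lemma le_ereal_sup_ex (R : realType) (Y : choiceType) (h : Y -> R) (B : R) :
  (B%:E < \esum_(y in [set: Y]) (h y)%:E)%E ->
  exists S : seq Y, uniq S /\ B < \sum_(y <- S) h y.
Proof.
move=> /ereal_sup_gt [v [A [finA _] <-]].
rewrite fsumEFin // lte_fin fsbig_finite // => hv.
by exists (finmap.enum_fset (fset_set A)); split => //; exact: finmap.fset_uniq.
Qed.

Lemma Pe_bound (R : realType) (Y : countType) (P : bool -> Y -> R)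
  (P0 : forall b y, 0 <= P b y)
  (Psum : forall b, (\esum_(y in [set: Y]) (P b y)%:E = 1)%E)
  n (C : bcode n) (X0s : seq Y) (C0 : R) :
  (0 < n)%N -> (0 < #|C|)%N -> unif_marginals C ->
  (forall j j', Pe P C j = Pe P C j') ->
  uniq X0s -> 0 < C0 -> C0 * ln 2 = \sum_(y <- X0s) tP (P false y) (P true y) ->
  forall j, (Pe P C j <= (@rate R n C / (2 * C0))%:E)%E.
Proof.
move=> n0 M0 hu heq uX C0p hC0 j0.
rewrite leNgt; apply/negP => hlt.
set B := @rate R n C / (2 * C0).
have Hj : forall j, exists S : seq (outs Y j), uniq S /\
    B < \sum_(y' <- S) mn (joint P C false y') (joint P C true y').
  move=> j; apply: le_ereal_sup_ex; rewrite -(PeF P M0 (hu j)).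
  by rewrite (heq j j0).
pose S j := proj1_sig (cid (Hj j)).
have uS : forall j, uniq (S j) by move=> j; exact: (proj2_sig (cid (Hj j))).1.
have lS : forall j, B < \sum_(y' <- S j) mn (joint P C false y') (joint P C true y').
  by move=> j; exact: (proj2_sig (cid (Hj j))).2.
pose s := undup (X0s ++ flatten [seq flatten [seq codom (y' : outs Y j) | y' <- S j] | j <- enum 'I_n]).
have us : uniq s := undup_uniq _.
have Ps := Ps_le Psum us.
have sS : forall j (y' : outs Y j) k, y' \in S j -> y' k \in s.
  move=> j y' k hy; rewrite mem_undup mem_cat; apply/orP; right.
  apply/flattenP; exists (flatten [seq codom (y' : outs Y j) | y' <- S j]).
    by apply/mapP; exists j => //; rewrite mem_enum.
  apply/flattenP; exists (codom y'); first by apply/mapP; exists y'.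
  exact: codom_f.
have Xs : {subset X0s <= s} by move=> y hy; rewrite mem_undup mem_cat hy.
have hred := @red _ _ P P0 s us Ps _ C M0 S uS sS.
have hcap := @cap_ge _ _ P P0 s us Ps _ uX Xs.
set sp := \sum_j \sum_(y' <- S j) mn (joint P C false y') (joint P C true y') in hred.
have B0 : 0 <= B by apply: divr_ge0; [exact: rate_ge0 | lra].
have hsp : n%:R * B < sp.
  have : \sum_(j : 'I_n) B < sp.
    apply: ltr_sum => [|j _]; last exact: lS.
    by apply/hasP; exists (Ordinal n0) => //; rewrite mem_index_enum.
  by rewrite sumr_const card_ord -(mulr_natl B n).
have sp0 : 0 <= sp by apply: le_trans (ltW hsp); apply: mulr_ge0 => //; exact: ler0n.
have ln2 : 0 < ln (2 : R) by apply: ln_gt0; lra.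
have Mp : (1 : R) <= #|C|%:R by rewrite ler1n.
have eM : ln (#|C|%:R : R) = 2 * (C0 * ln 2) * (n%:R * B).
  rewrite /B /rate /log2; field.
  apply/and3P; split; [exact: lt0r_neq0 | | exact: lt0r_neq0].
  by rewrite pnatr_eq0 -lt0n.
have : ln (#|C|%:R : R) < ln (#|C|%:R : R).
  rewrite {1}eM; apply: lt_le_trans hred.
  apply: lt_le_trans (_ : 2 * (C0 * ln 2) * sp <= _).
    rewrite ltr_pM2l //; apply: mulr_gt0 => //; apply: mulr_gt0 => //; lra.
  apply: ler_wpM2r => //; apply: ler_wpM2l; first lra.
  by rewrite hC0.
by rewrite ltxx.
Qed.

Unset Implicit Arguments.

Theorem lemma2 (R : realType) (Y : countType) (P : bool -> Y -> R)
  (sigma : Y -> Y) (n : nat -> nat) (C : forall i, bcode (n i)) :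
  is_BMS P sigma ->
  (forall i, (0 < n i)%N) ->
  (forall i, (0 < #|C i|)%N) ->
  (limn_esup (fun i => (@rate R (n i) (C i))%:E) < @capacity R Y P)%E ->
  (forall i, @unif_marginals (n i) (C i)) ->
  (forall i (j j' : 'I_(n i)), @Pe R Y P (n i) (C i) j = @Pe R Y P (n i) (C i) j') ->
  exists c : R, 0 < c /\
    \forall i \near \oo, forall j : 'I_(n i), (@Pe R Y P (n i) (C i) j < (1/2 - c)%:E)%E.
Proof.
move=> [P0 [Psum _]] npos Cpos Hlim Hunif Heq.
have [r [hr1 hr2]] := ereal_between Hlim.
move: hr2; rewrite /capacity => /ereal_sup_gt [v [X0 [finX0 _] <-]].
rewrite fsumEFin // lte_fin fsbig_finite // => hrC.
set X0s := finmap.enum_fset (fset_set X0) in hrC.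
have uX : uniq X0s := finmap.fset_uniq _.
set C0 := \sum_(y <- X0s) _ in hrC.
have ln2 : 0 < ln (2 : R) by apply: ln_gt0; lra.
have hC0 : C0 * ln 2 = \sum_(y <- X0s) tP (P false y) (P true y).
  rewrite /C0 mulr_suml; apply: eq_bigr => y _; rewrite capE ?P0 //.
  by field; exact: lt0r_neq0.
move: hr1; rewrite /limn_esup /limf_esup => /ereal_inf_lt [w [V hV <-]] hVr.
have hrate : forall i, V i -> @rate R (n i) (C i) < r.
  move=> i Vi; rewrite -lte_fin; apply: le_lt_trans hVr.
  by apply: ereal_sup_ubound; exists i.
have [C0le|C0p] := leP C0 0.
  exists 1; split => //; apply: filterS hV => i Vi j.
  have h1 := hrate i Vi; have h2 := rate_ge0 R (npos i) (Cpos i).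
  exfalso; clear -h1 h2 hrC C0le; lra.
exists ((C0 - r) / (4 * C0)); split; first by apply: divr_gt0; lra.
apply: filterS hV => i Vi j.
have hb := Pe_bound P0 Psum (npos i) (Cpos i) (Hunif i) (Heq i) uX C0p hC0 j.
apply: (le_lt_trans hb); rewrite lte_fin.
have := hrate i Vi; set t := @rate R (n i) (C i) => ht.
have h4 : 0 < 4 * C0 by lra.
rewrite -(ltr_pM2r h4).
have -> : t / (2 * C0) * (4 * C0) = 2 * t by field; exact: lt0r_neq0.
have -> : (1 / 2 - (C0 - r) / (4 * C0)) * (4 * C0) = C0 + r by field; exact: lt0r_neq0.
clear -ht hrC; lra.
Qed.
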